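(* Let $K>1$, $\mathcal{Y}=\{1,\dots,K\}$, and let $(X,Y,M)$ be distributed on $\mathcal{X}\times\mathcal{Y}\times\mathcal{Y}$. Define the asymmetric softmax $\tilde{\bm{\psi}}:\mathbb{R}^{K+1}\to\mathbb{R}^{K+1}$ by $\tilde{\psi}_y(\bm{u})=\exp(u_y)/\sum_{y'=1}^{K}\exp(u_{y'})$ for $1\le y\le K$ and $\tilde{\psi}_{K+1}(\bm{u})=\exp(u_{K+1})/\big(\sum_{y'=1}^{K+1}\exp(u_{y'})-\max_{y'\le K}\exp(u_{y'})\big)$, and the surrogate $$L_{\tilde{\psi}}(\bm{u},y,m)=-\log\tilde{\psi}_y(\bm{u})-[\![m\ne y]\!]\log\big(1-\tilde{\psi}_{K+1}(\bm{u})\big)-[\![m=y]\!]\log\tilde{\psi}_{K+1}(\bm{u}).$$ Let $R_{L_{\tilde{\psi}}}(\bm{g})=\mathbb{E}[L_{\tilde{\psi}}(\bm{g}(X),Y,M)]$ for measurable $\bm{g}:\mathcal{X}\to\mathbb{R}^{K+1}$. Then: (1) (consistency) for every $\bm{g}^*\in\mathop{\rm argmin}_{\bm{g}}R_{L_{\tilde{\psi}}}(\bm{g})$, the decision rule $\varphi\circ\bm{g}^*$ minimizes the 0-1-deferral risk $R^{\bot}_{01}(f)=\mathbb{E}[\ell^{\bot}_{01}(f(X),Y,M)]$ over all $f:\mathcal{X}\to\mathcal{Y}\cup\{\bot\}$; (2) the estimator $\hat{\bm{\eta}}^{\tilde{\psi}}=\tilde{\bm{\psi}}$ satisfies $\tilde{\bm{\psi}}(\bm{g}^*(\bm{x}))=[\bm{\eta}(\bm{x});\Pr(M=Y\mid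 X=\bm{x})]$ for all $\bm{x}\in\mathcal{X}$; (3) any other probability estimator for $L_{\tilde{\psi}}$ is necessarily bounded.
   Context: $\bm{\eta}(\bm{x})=(\Pr(Y=y\mid X=\bm{x}))_{y=1}^K$. The 0-1-deferral loss is $\ell^{\bot}_{01}(f(\bm{x}),y,m)=[\![f(\bm{x})\in\mathcal{Y},\ f(\bm{x})\ne y]\!]+[\![f(\bm{x})=\bot,\ m\ne y]\!]$, where $\bot$ denotes deferral to the expert whose prediction is $M$. The map $\varphi:\mathbb{R}^{K+1}\to\mathcal{Y}\cup\{\bot\}$ is $\varphi(\bm{u})=\bot$ if $u_{K+1}>\max_{y\le K}u_y$ and $\varphi(\bm{u})=\mathop{\rm argmax}_{y\le K}u_y$ otherwise. A probability estimator for a surrogate $L$ is a map $\hat{\bm{\eta}}:\mathbb{R}^{K+1}\to\mathbb{R}^{K+1}$ such that for every distribution and every minimizer $\bm{g}^*$ of the surrogate risk, $\hat{\bm{\eta}}(\bm{g}^*(\bm{x}))=[\bm{\eta}(\bm{x});\Pr(M=Y\mid X=\bm{x})]$. *)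

(* Defs.v *)
From HB Require Import structures.
From mathcomp Require Import all_boot all_order all_algebra.
From mathcomp Require Import all_classical all_reals all_analysis.
Set Implicit Arguments. Unset Strict Implicit. Unset Printing Implicit Defensive.
Import Order.TTheory GRing.Theory Num.Theory.
Import numFieldNormedType.Exports.
Local Open Scope classical_set_scope.
Local Open Scope ring_scope.

(* Labels Y = {1..K} are represented by 'I_K (0-based); score vectors in
   R^{K+1} by functions 'I_K.+1 -> R, whose last coordinate (ord_max) is the
   deferral coordinate (index K+1 in the paper). *)

Section Defs.
Variables (R : realType) (K : nat).

Definition lab (y : 'I_K) : 'I_K.+1 := widen_ord (leqnSn K) y.

Definition asoftmax (u : 'I_K.+1 -> R) (i : 'I_K.+1) : R :=
  if (i < K)%N then
    expR (u i) / (\sum_(j < K.+1 | (j < K)%N) expR (u j))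
  else
    expR (u i) / (\sum_(j < K.+1) expR (u j)
                  - \big[Num.max/0]_(j < K.+1 | (j < K)%N) expR (u j)).

Definition Lpsi (u : 'I_K.+1 -> R) (y m : 'I_K) : R :=
  - ln (asoftmax u (lab y))
  - (if m != y then ln (1 - asoftmax u ord_max) else 0)
  - (if m == y then ln (asoftmax u ord_max) else 0).

(* decision map phi : R^{K+1} -> Y u {bot}; None stands for bot.
   argmax ties are broken by [pick]. *)
Definition phi (u : 'I_K.+1 -> R) : option 'I_K :=
  if [forall y : 'I_K, u (lab y) < u ord_max] then None
  else [pick y : 'I_K | [forall y' : 'I_K, u (lab y') <= u (lab y)]].

Definition l01 (d : option 'I_K) (y m : 'I_K) : R :=
  match d with
  | Some y' => (y' != y)%:R
  | None => (m != y)%:R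
  end.

(* [eta(x); Pr(M = Y | X = x)] computed from the conditional pmf q(y,m) *)
Definition target (q : 'I_K -> 'I_K -> R) (i : 'I_K.+1) : R :=
  match unlift ord_max i with
  | Some y => \sum_(m < K) q y m
  | None => \sum_(y < K) q y y
  end.

Section Dist.
Context (d : measure_display) (T : measurableType d).

(* The joint law of (X, Y, M) on T x Y x Y is given by the marginal P of X
   and a (measurable) conditional pmf p x y m = Pr(Y = y, M = m | X = x). *)
Definition cond_pmf (p : T -> 'I_K -> 'I_K -> R) : Prop :=
  [/\ forall x y m, 0 <= p x y m,
      forall x, \sum_(y < K) \sum_(m < K) p x y m = 1
    & forall y m, measurable_fun setT (fun x => p x y m)].

Definition Rpsi (P : probability T R) (p : T -> 'I_K -> 'I_K -> R)
    (g : 'I_K.+1 -> T -> R) : \bar R :=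
  (\int[P]_x (\sum_(y < K) \sum_(m < K) p x y m * Lpsi (fun i => g i x) y m)%:E)%E.

Definition meas_score (g : 'I_K.+1 -> T -> R) : Prop :=
  forall i, measurable_fun setT (g i).

Definition risk_minimizer (P : probability T R) (p : T -> 'I_K -> 'I_K -> R)
    (g : 'I_K.+1 -> T -> R) : Prop :=
  meas_score g /\
  forall g', meas_score g' -> (Rpsi P p g <= Rpsi P p g')%E.

Definition meas_dec (f : T -> option 'I_K) : Prop :=
  forall o, measurable (f @^-1` [set o]).

Definition R01 (P : probability T R) (p : T -> 'I_K -> 'I_K -> R)
    (f : T -> option 'I_K) : \bar R :=
  (\int[P]_x (\sum_(y < K) \sum_(m < K) p x y m * l01 (f x) y m)%:E)%E.

End Dist.

Definition prob_estimator (h : ('I_K.+1 -> R) -> ('I_K.+1 -> R)) : Prop :=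
  forall (d : measure_display) (T : measurableType d) (P : probability T R)
         (p : T -> 'I_K -> 'I_K -> R) (g : 'I_K.+1 -> T -> R),
    cond_pmf p -> risk_minimizer P p g ->
    {ae P, forall x, h (fun i => g i x) = target (p x)}.

End Defs.

(* Main.v *)
Require Import Defs.
From HB Require Import structures.
From mathcomp Require Import all_boot all_order all_algebra.
From mathcomp Require Import all_classical all_reals all_analysis.
From mathcomp Require Import ring lra.
From mathcomp Require Import measurable_realfun.
Set Implicit Arguments. Unset Strict Implicit. Unset Printing Implicit Defensive.
Import Order.TTheory GRing.Theory Num.Theory.
Import numFieldNormedType.Exports.
Local Open Scope classical_set_scope.
Local Open Scope ring_scope.


Lemma ln_le_sub1 (R : realType) (x : R) : 0 < x -> ln x <= x - 1.
Proof.
move=> x0; have := @le_ln1Dx R (x - 1).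
have -> : 1 + (x - 1) = x by ring.
apply; lra.
Qed.

Lemma gibbs_term (R : realType) (w a : R) : 0 <= w -> 0 < a ->
  (w - a) ^+ 2 / (2 * (w + a)) + (w - a) / 2 <=
  w * ln ((a + w) / 2) - w * ln a.
Proof.
move=> w0 a0.
have wa0 : 0 < w + a by lra.
have b0 : 0 < (a + w) / 2 by lra.
have h1 : ln (2 * a / (a + w)) <= 2 * a / (a + w) - 1.
  by apply: ln_le_sub1; apply: divr_gt0; lra.
have e1 : ln (2 * a / (a + w)) = ln a - ln ((a + w) / 2).
  rewrite -ln_div ?posrE //; congr ln; field; lra.
have e2 : (w - a) ^+ 2 / (2 * (w + a)) + (w - a) / 2 = w * (1 - 2 * a / (a + w)).
  field; lra.
rewrite e2 -mulrBr; apply: ler_wpM2l => //.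
rewrite e1 in h1; lra.
Qed.

Lemma gibbs_weak (R : realType) (w a : R) : 0 < w -> 0 < a ->
  w * ln a - w * ln w <= a - w.
Proof.
move=> w0 a0.
have h := ln_le_sub1 (divr_gt0 a0 w0).
rewrite ln_div ?posrE // in h.
rewrite -mulrBr.
have -> : a - w = w * (a / w - 1) by field; lra.
by apply: ler_wpM2l => //; lra.
Qed.


Definition Sx (R : realType) (K : nat) (u : 'I_K.+1 -> R) : R :=
  \sum_(j < K.+1 | (j < K)%N) expR (u j).
Definition Mx (R : realType) (K : nat) (u : 'I_K.+1 -> R) : R :=
  \big[Num.max/0]_(j < K.+1 | (j < K)%N) expR (u j).

Lemma sum_lab (R : realType) (K : nat) (F : 'I_K.+1 -> R) :
  \sum_(j < K.+1 | (j < K)%N) F j = \sum_(y < K) F (lab y).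
Proof.
rewrite big_mkcond big_ord_recr /= ltnn addr0.
by apply: eq_bigr => i _; rewrite /= ltn_ord.
Qed.

Lemma asoft_lab (R : realType) (K : nat) (u : 'I_K.+1 -> R) (y : 'I_K) :
  asoftmax u (lab y) = expR (u (lab y)) / Sx u.
Proof. by rewrite /asoftmax /= ltn_ord. Qed.

Lemma asoft_last (R : realType) (K : nat) (u : 'I_K.+1 -> R) :
  asoftmax u ord_max = expR (u ord_max) / (Sx u + expR (u ord_max) - Mx u).
Proof.
rewrite /asoftmax /= ltnn; congr (_ / (_ - _)).
rewrite big_ord_recr /= /Sx; congr (_ + _).
by rewrite sum_lab /=; apply: eq_bigr => i _.
Qed.

Lemma bigmax_ge (R : realType) (I : eqType) (r : seq I) (P : pred I) (F : I -> R) j :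
  j \in r -> P j -> F j <= \big[Num.max/0]_(i <- r | P i) F i.
Proof.
elim: r => [//|a r IH]; rewrite inE big_cons => /orP [/eqP <- Pj|jr Pj].
  by rewrite Pj le_max lexx.
case: (P a); last exact: IH.
by rewrite le_max (IH jr Pj) orbT.
Qed.

Lemma bigmax_att (R : realType) (I : eqType) (r : seq I) (P : pred I) (F : I -> R) :
  \big[Num.max/0]_(i <- r | P i) F i = 0 \/
  exists2 j, P j & \big[Num.max/0]_(i <- r | P i) F i = F j.
Proof.
apply: (big_ind (fun x => x = 0 \/ exists2 j, P j & x = F j)).
- by left.
- move=> x y hx hy; rewrite /Num.max; case: ifP => _; [exact: hy|exact: hx].
- by move=> i Pi; right; exists i.
Qed.

Lemma Sx_lab (R : realType) (K : nat) (u : 'I_K.+1 -> R) :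
  Sx u = \sum_(y < K) expR (u (lab y)).
Proof. exact: sum_lab. Qed.

Lemma Sx_gt0 (R : realType) (K : nat) (u : 'I_K.+1 -> R) : (0 < K)%N -> 0 < Sx u.
Proof.
move=> K0; rewrite Sx_lab (bigD1 (Ordinal K0)) //=.
apply: ltr_pwDl; first exact: expR_gt0.
by apply: sumr_ge0 => i _; apply: ltW; apply: expR_gt0.
Qed.

Lemma Mx_ge (R : realType) (K : nat) (u : 'I_K.+1 -> R) (y : 'I_K) :
  expR (u (lab y)) <= Mx u.
Proof.
rewrite /Mx; apply: (@bigmax_ge R _ _ (fun j : 'I_K.+1 => (j < K)%N) (fun j => expR (u j))).
  by rewrite mem_index_enum.
by rewrite /= ltn_ord.
Qed.

Lemma Mx_att (R : realType) (K : nat) (u : 'I_K.+1 -> R) : (0 < K)%N ->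
  exists y : 'I_K, Mx u = expR (u (lab y)).
Proof.
move=> K0; case: (bigmax_att (index_enum 'I_K.+1) (fun j : 'I_K.+1 => (j < K)%N)
   (fun j => expR (u j))).
  move=> h; have := Mx_ge u (Ordinal K0); rewrite /Mx h => h2.
  by have := expR_gt0 (u (lab (Ordinal K0))); lra.
move=> [j /= jK hj]; exists (Ordinal jK); rewrite /Mx hj; congr (expR (u _)); exact: val_inj.
Qed.

Lemma SMx_gt0 (R : realType) (K : nat) (u : 'I_K.+1 -> R) : (1 < K)%N ->
  0 < Sx u - Mx u.
Proof.
move=> K1; have K0 : (0 < K)%N by apply: ltn_trans K1.
have [y0 ->] := Mx_att u K0.
rewrite Sx_lab (bigD1 y0) //= addrC addrK.
have [y1 y10] : exists y1 : 'I_K, y1 != y0.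
  case: (eqVneq y0 (Ordinal K0)) => [e|ne].
    by exists (Ordinal K1); rewrite e; apply/negP => /eqP/(congr1 val).
  by exists (Ordinal K0); rewrite eq_sym.
rewrite (bigD1 y1) //=; apply: ltr_pwDl; first exact: expR_gt0.
by apply: sumr_ge0 => i _; apply: ltW; apply: expR_gt0.
Qed.

Lemma psi_pos (R : realType) (K : nat) (u : 'I_K.+1 -> R) (y : 'I_K) :
  0 < asoftmax u (lab y).
Proof.
rewrite asoft_lab; apply: divr_gt0; first exact: expR_gt0.
apply: Sx_gt0; exact: (leq_ltn_trans (leq0n _) (ltn_ord y)).
Qed.

Lemma psi_sum (R : realType) (K : nat) (u : 'I_K.+1 -> R) : (0 < K)%N ->
  \sum_(y < K) asoftmax u (lab y) = 1.
Proof.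
move=> K0; under eq_bigr do rewrite asoft_lab.
rewrite -mulr_suml -Sx_lab divff //; exact/lt0r_neq0/Sx_gt0.
Qed.

Lemma psil_bnd (R : realType) (K : nat) (u : 'I_K.+1 -> R) : (1 < K)%N ->
  0 < asoftmax u ord_max < 1.
Proof.
move=> K1; rewrite asoft_last; have h := SMx_gt0 u K1; have e := expR_gt0 (u ord_max).
apply/andP; split; first by apply: divr_gt0; lra.
by rewrite ltr_pdivrMr; lra.
Qed.


Definition etaq (R : realType) (K : nat) (q : 'I_K -> 'I_K -> R) (y : 'I_K) : R :=
  \sum_(m < K) q y m.
Definition cc (R : realType) (K : nat) (q : 'I_K -> 'I_K -> R) : R :=
  \sum_(y < K) q y y.
Definition Cr (R : realType) (K : nat) (q : 'I_K -> 'I_K -> R) (u : 'I_K.+1 -> R) : R :=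
  \sum_(y < K) \sum_(m < K) q y m * Lpsi u y m.

Lemma sum_if_eq (R : realType) (K : nat) (F : 'I_K -> R) (y : 'I_K) :
  \sum_(m < K) (if m == y then F m else 0) = F y.
Proof. by rewrite -big_mkcond big_pred1_eq. Qed.

Lemma C_form (R : realType) (K : nat) (q : 'I_K -> 'I_K -> R) (u : 'I_K.+1 -> R) :
  \sum_(y < K) etaq q y = 1 ->
  Cr q u = - \sum_(y < K) etaq q y * ln (asoftmax u (lab y))
           - (1 - cc q) * ln (1 - asoftmax u ord_max)
           - cc q * ln (asoftmax u ord_max).
Proof.
move=> hs; rewrite /Cr.
set A := ln (1 - asoftmax u ord_max); set B := ln (asoftmax u ord_max).
have e : forall y m, q y m * Lpsi u y m =
   - (q y m * ln (asoftmax u (lab y))) - q y m * A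
   + (if m == y then q y m * A else 0) - (if m == y then q y m * B else 0).
  move=> y m; rewrite /Lpsi -/A -/B; case: eqP => _ /=; ring.
under eq_bigr do under eq_bigr do rewrite e.
have e2 : forall y, \sum_(m < K) (- (q y m * ln (asoftmax u (lab y))) - q y m * A
   + (if m == y then q y m * A else 0) - (if m == y then q y m * B else 0)) =
   - (etaq q y * ln (asoftmax u (lab y))) - etaq q y * A + q y y * A - q y y * B.
  move=> y; rewrite !big_split /= !sumrN sum_if_eq sum_if_eq.
  by rewrite -!mulr_suml.
under eq_bigr do rewrite e2.
rewrite !big_split /= !sumrN -!mulr_suml hs /cc; ring.
Qed.

Lemma lab_lift (K : nat) (y : 'I_K) : lab y = lift ord_max y.
Proof. by apply: val_inj; rewrite /= /bump leqNgt ltn_ord. Qed.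

Lemma target_lab (R : realType) (K : nat) (q : 'I_K -> 'I_K -> R) (y : 'I_K) :
  target q (lab y) = etaq q y.
Proof. by rewrite /target lab_lift liftK. Qed.

Lemma target_last (R : realType) (K : nat) (q : 'I_K -> 'I_K -> R) :
  target q ord_max = cc q.
Proof. by rewrite /target unlift_none. Qed.

Lemma ord_cases (K : nat) (i : 'I_K.+1) : i = ord_max \/ exists y, i = lab y.
Proof.
case: (unliftP ord_max i) => [y ->|->]; last by left.
by right; exists y; rewrite lab_lift.
Qed.

Definition r01 (R : realType) (K : nat) (q : 'I_K -> 'I_K -> R) (d : option 'I_K) : R :=
  \sum_(y < K) \sum_(m < K) q y m * l01 R d y m.

Lemma r01_some (R : realType) (K : nat) (q : 'I_K -> 'I_K -> R) (y' : 'I_K) :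
  \sum_(y < K) etaq q y = 1 -> r01 q (Some y') = 1 - etaq q y'.
Proof.
move=> hs; rewrite /r01 /= -[in RHS]hs (bigD1 y') //= eqxx.
under eq_bigr do rewrite mulr0.
rewrite big1 // add0r [in RHS](bigD1 y') //=.
have -> : forall a b : R, a + b - a = b by move=> a b; ring.
apply: eq_bigr => y hy; rewrite /etaq; apply: eq_bigr => m _.
by rewrite eq_sym hy mulr1.
Qed.

Lemma r01_none (R : realType) (K : nat) (q : 'I_K -> 'I_K -> R) :
  \sum_(y < K) etaq q y = 1 -> r01 q None = 1 - cc q.
Proof.
move=> hs; rewrite /r01 /= -[in RHS]hs /cc /etaq -sumrB; apply: eq_bigr => y _.
rewrite (bigD1 y) //= eqxx mulr0 add0r [in RHS](bigD1 y) //= addrC addrK.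
by apply: eq_bigr => m hm; rewrite hm mulr1.
Qed.


Lemma sq_ge0' (R : realType) (w a : R) : 0 <= w -> 0 < a ->
  0 <= (w - a) ^+ 2 / (2 * (w + a)).
Proof.
move=> w0 a0; apply: divr_ge0; first exact: sqr_ge0.
by apply: mulr_ge0 => //; lra.
Qed.

Lemma sq_eq0' (R : realType) (w a : R) : 0 <= w -> 0 < a ->
  (w - a) ^+ 2 / (2 * (w + a)) = 0 -> w = a.
Proof.
move=> w0 a0 /eqP; rewrite mulf_eq0 invr_eq0 => /orP [|].
  by rewrite sqrf_eq0 subr_eq0 => /eqP.
move=> /eqP h; lra.
Qed.

Lemma pmf_facts (R : realType) (K : nat) (q : 'I_K -> 'I_K -> R) :
  (forall y m, 0 <= q y m) -> \sum_(y < K) \sum_(m < K) q y m = 1 ->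
  [/\ forall y, 0 <= etaq q y, \sum_(y < K) etaq q y = 1 & 0 <= cc q <= 1].
Proof.
move=> q0 q1; split => //.
- by move=> y; apply: sumr_ge0 => m _.
apply/andP; split; first by apply: sumr_ge0 => y _.
rewrite -q1 /cc; apply: ler_sum => y _.
rewrite (bigD1 y) //= lerDl; exact: sumr_ge0.
Qed.

Lemma improve_pt (R : realType) (K : nat) (hK : (1 < K)%N)
  (q : 'I_K -> 'I_K -> R) (u u' : 'I_K.+1 -> R) :
  (forall y m, 0 <= q y m) -> \sum_(y < K) \sum_(m < K) q y m = 1 ->
  (forall y, asoftmax u' (lab y) = (asoftmax u (lab y) + etaq q y) / 2) ->
  asoftmax u' ord_max = (asoftmax u ord_max + cc q) / 2 ->
  Cr q u' <= Cr q u /\ (Cr q u' = Cr q u -> asoftmax u = target q).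
Proof.
move=> q0 q1 hy hl.
have [e0 e1 /andP [c0 c1]] := pmf_facts q0 q1.
have K0 : (0 < K)%N by apply: ltn_trans hK.
rewrite !C_form //.
set t := fun y => (etaq q y - asoftmax u (lab y)) ^+ 2 / (2 * (etaq q y + asoftmax u (lab y))).
have /andP [a0 a1] := psil_bnd u hK.
set tc := (cc q - (asoftmax u ord_max)) ^+ 2 / (2 * (cc q + (asoftmax u ord_max))).
set tc' := ((1 - cc q) - (1 - (asoftmax u ord_max))) ^+ 2 / (2 * ((1 - cc q) + (1 - (asoftmax u ord_max)))).
have t0 : forall y, 0 <= t y by move=> y; apply: sq_ge0' => //; exact: psi_pos.
have tc0 : 0 <= tc by apply: sq_ge0' => //; lra.
have tc'0 : 0 <= tc' by rewrite /tc'; apply: sq_ge0'; [rewrite subr_ge0|rewrite subr_gt0].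
have h1 : \sum_(y < K) t y <= \sum_(y < K) etaq q y * ln (asoftmax u' (lab y))
                               - \sum_(y < K) etaq q y * ln (asoftmax u (lab y)).
  rewrite -sumrB.
  have -> : \sum_(y < K) t y = \sum_(y < K) (t y + (etaq q y - asoftmax u (lab y)) / 2).
    rewrite big_split /= -mulr_suml sumrB e1 psi_sum // subrr mul0r addr0 //.
  apply: ler_sum => y _; rewrite hy.
  by apply: gibbs_term => //; exact: psi_pos.
have h2 : tc + (cc q - (asoftmax u ord_max)) / 2 <= cc q * ln (asoftmax u' ord_max) - cc q * ln (asoftmax u ord_max).
  by rewrite hl; apply: gibbs_term.
have h3 : tc' + ((1 - cc q) - (1 - (asoftmax u ord_max))) / 2 <=
          (1 - cc q) * ln (1 - asoftmax u' ord_max) - (1 - cc q) * ln (1 - (asoftmax u ord_max)).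
  have -> : 1 - asoftmax u' ord_max = ((1 - (asoftmax u ord_max)) + (1 - cc q)) / 2 by rewrite hl; field.
  by apply: gibbs_term; [rewrite subr_ge0|rewrite subr_gt0].
have hQ : \sum_(y < K) t y + tc + tc' <=
  (- \sum_(y < K) etaq q y * ln (asoftmax u (lab y)) - (1 - cc q) * ln (1 - (asoftmax u ord_max)) - cc q * ln (asoftmax u ord_max))
  - (- \sum_(y < K) etaq q y * ln (asoftmax u' (lab y)) - (1 - cc q) * ln (1 - asoftmax u' ord_max)
     - cc q * ln (asoftmax u' ord_max)).
  lra.
have s0 : 0 <= \sum_(y < K) t y by apply: sumr_ge0 => y _.
split; first lra.
move=> heq.
have st0 : \sum_(y < K) t y = 0 by lra.
have tc00 : tc = 0 by lra.
apply/funext => i; case: (ord_cases i) => [->|[y ->]].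
  rewrite target_last; apply/esym/sq_eq0'; [exact: c0|exact: a0|exact: tc00].
rewrite target_lab; apply/esym/sq_eq0'; [exact: e0|exact: psi_pos|].
have := psumr_eq0P (fun y _ => t0 y) st0; apply => //.
Qed.

Lemma opt_pt (R : realType) (K : nat) (hK : (1 < K)%N)
  (q : 'I_K -> 'I_K -> R) (u v : 'I_K.+1 -> R) :
  (forall y m, 0 <= q y m) -> \sum_(y < K) \sum_(m < K) q y m = 1 ->
  asoftmax u = target q -> Cr q u <= Cr q v.
Proof.
move=> q0 q1 hu.
have [e0 e1 /andP [c0 c1]] := pmf_facts q0 q1.
have K0 : (0 < K)%N by apply: ltn_trans hK.
have hy : forall y, asoftmax u (lab y) = etaq q y by move=> y; rewrite hu target_lab.
have hl : asoftmax u ord_max = cc q by rewrite hu target_last.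
have /andP [a0 a1] := psil_bnd u hK.
have /andP [b0 b1] := psil_bnd v hK.
rewrite !C_form //.
under eq_bigr do rewrite hy.
rewrite hl.
have h1 : \sum_(y < K) etaq q y * ln (asoftmax v (lab y)) - \sum_(y < K) etaq q y * ln (etaq q y)
   <= 0.
  rewrite -sumrB.
  have E : \sum_(y < K) (asoftmax v (lab y) - etaq q y) = 0.
    by rewrite sumrB e1 psi_sum // subrr.
  apply: (@le_trans _ _ (\sum_(y < K) (asoftmax v (lab y) - etaq q y))); last by rewrite E.
  apply: ler_sum => y _; rewrite -hy; apply: gibbs_weak; [exact: psi_pos|exact: psi_pos].
have h2 : cc q * ln (asoftmax v ord_max) - cc q * ln (cc q) <= asoftmax v ord_max - cc q.
  by apply: gibbs_weak; lra.
have h3 : (1 - cc q) * ln (1 - asoftmax v ord_max) - (1 - cc q) * ln (1 - cc q)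
   <= (1 - asoftmax v ord_max) - (1 - cc q).
  by apply: gibbs_weak; lra.
lra.
Qed.


Lemma lnKp (R : realType) (x : R) : 0 < x -> expR (ln x) = x.
Proof. by move=> x0; apply: lnK; rewrite posrE. Qed.

Lemma Sx_ext (R : realType) (K : nat) (u v : 'I_K.+1 -> R) :
  (forall y, u (lab y) = v (lab y)) -> Sx u = Sx v.
Proof. by move=> h; rewrite !Sx_lab; apply: eq_bigr => y _; rewrite h. Qed.

Lemma Mx_ext (R : realType) (K : nat) (u v : 'I_K.+1 -> R) :
  (forall y, u (lab y) = v (lab y)) -> Mx u = Mx v.
Proof.
move=> h; rewrite /Mx; apply: eq_bigr => j jK.
have -> : j = lab (Ordinal jK) by apply: val_inj.
by rewrite h.
Qed.

Definition mkv0 (R : realType) (K : nat) (b : 'I_K -> R) : 'I_K.+1 -> R :=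
  fun i => match unlift ord_max i with Some y => ln (b y) | None => 0 end.

Definition mkv (R : realType) (K : nat) (b : 'I_K -> R) (be : R) : 'I_K.+1 -> R :=
  fun i => match unlift ord_max i with
           | Some y => ln (b y)
           | None => ln (be * (1 - Mx (mkv0 b)) / (1 - be)) end.

Lemma mkv_lab (R : realType) (K : nat) (b : 'I_K -> R) be y : mkv b be (lab y) = ln (b y).
Proof. by rewrite /mkv lab_lift liftK. Qed.

Lemma mkv0_lab (R : realType) (K : nat) (b : 'I_K -> R) y : mkv0 b (lab y) = ln (b y).
Proof. by rewrite /mkv0 lab_lift liftK. Qed.

Lemma mkv_last (R : realType) (K : nat) (b : 'I_K -> R) be :
  mkv b be ord_max = ln (be * (1 - Mx (mkv0 b)) / (1 - be)).
Proof. by rewrite /mkv unlift_none. Qed.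

Lemma mkv_spec (R : realType) (K : nat) (hK : (1 < K)%N) (b : 'I_K -> R) (be : R) :
  (forall y, 0 < b y) -> \sum_(y < K) b y = 1 -> 0 < be < 1 ->
  (forall y, asoftmax (mkv b be) (lab y) = b y) /\ asoftmax (mkv b be) ord_max = be.
Proof.
move=> b0 b1 /andP [be0 be1].
have S1 : Sx (mkv b be) = 1.
  by rewrite Sx_lab -b1; apply: eq_bigr => y _; rewrite mkv_lab lnKp.
have S0 : Sx (mkv0 b) = 1.
  by rewrite Sx_lab -b1; apply: eq_bigr => y _; rewrite mkv0_lab lnKp.
have M1 : Mx (mkv b be) = Mx (mkv0 b) by apply: Mx_ext => y; rewrite mkv_lab mkv0_lab.
have hM : 0 < 1 - Mx (mkv0 b) by rewrite -{1}S0; exact: SMx_gt0.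
split.
  by move=> y; rewrite asoft_lab S1 divr1 mkv_lab lnKp.
rewrite asoft_last S1 M1 mkv_last lnKp; last first.
  by apply: divr_gt0; [apply: mulr_gt0|rewrite subr_gt0].
have h1 : 1 - be != 0 by rewrite subr_eq0 eq_sym lt_eqF.
have h2 : 1 - Mx (mkv0 b) != 0 by exact: (lt0r_neq0 hM).
have -> : 1 + be * (1 - Mx (mkv0 b)) / (1 - be) - Mx (mkv0 b) =
          (1 - Mx (mkv0 b)) / (1 - be) by field.
by field; rewrite h2 h1.
Qed.

Lemma phi_spec (R : realType) (K : nat) (hK : (0 < K)%N) (u : 'I_K.+1 -> R) :
  (phi u = None /\ forall y, u (lab y) < u ord_max) \/
  (exists y, [/\ phi u = Some y, forall y', u (lab y') <= u (lab y)
                & u ord_max <= u (lab y)]).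
Proof.
rewrite /phi; case: ifP => [/forallP h|/negbT].
  by left; split.
rewrite negb_forall => /existsP [y0]; rewrite -leNgt => h0.
case: pickP => [y /forallP hy|hn].
  by right; exists y; split => //; apply: le_trans h0 _; exact: hy.
exfalso.
have [y1 hy1] := Mx_att u hK.
have := hn y1; move/negbT/negP; apply; apply/forallP => y'.
by rewrite -ler_expR -hy1 Mx_ge.
Qed.

Lemma cmp_lemma (R : realType) (e M S : R) : 0 < S -> 0 < S - M -> 0 < e ->
  e / (e + S - M) - M / S = (e - M) * (S - M) / (S * (e + S - M)).
Proof.
move=> S0 SM e0; field.
rewrite (lt0r_neq0 S0) andbT; apply: lt0r_neq0; lra.
Qed.

Lemma phi_opt (R : realType) (K : nat) (hK : (1 < K)%N) (q : 'I_K -> 'I_K -> R)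
  (u : 'I_K.+1 -> R) (d : option 'I_K) :
  (forall y m, 0 <= q y m) -> \sum_(y < K) \sum_(m < K) q y m = 1 ->
  asoftmax u = target q -> r01 q (phi u) <= r01 q d.
Proof.
move=> q0 q1 hu.
have [e0 e1 /andP [c0 c1]] := pmf_facts q0 q1.
have K0 : (0 < K)%N by apply: ltn_trans hK.
have hy : forall y, etaq q y = expR (u (lab y)) / Sx u.
  by move=> y; rewrite -target_lab -hu asoft_lab.
have hl : cc q = expR (u ord_max) / (expR (u ord_max) + Sx u - Mx u).
  by rewrite -target_last -hu asoft_last (addrC (Sx u)).
have S0 := Sx_gt0 u K0; have SM := SMx_gt0 u hK; have ee := expR_gt0 (u ord_max).
have E := cmp_lemma S0 SM ee.
have [y1 hy1] := Mx_att u K0.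
have D0 : 0 < Sx u * (expR (u ord_max) + Sx u - Mx u).
  by apply: mulr_gt0 => //; lra.
case: (phi_spec K0 u) => [[-> hlt]|[y [-> hmax hlast]]].
  rewrite r01_none //.
  have hc : forall y', etaq q y' <= cc q.
    move=> y'; rewrite hy hl -subr_ge0.
    apply: (@le_trans _ _ (expR (u ord_max) / (expR (u ord_max) + Sx u - Mx u) - Mx u / Sx u)).
      rewrite E; apply: divr_ge0 => //; last exact: ltW.
      apply: mulr_ge0; last exact: ltW.
      by rewrite subr_ge0 hy1 ler_expR ltW.
    by rewrite lerD2l lerN2 ler_pM2r ?invr_gt0 // Mx_ge.
  case: d => [y'|]; last by rewrite r01_none.
  by rewrite r01_some // lerD2l lerN2.
rewrite r01_some //.
have hM : Mx u = expR (u (lab y)).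
  by apply/eqP; rewrite eq_le Mx_ge andbT hy1 ler_expR hmax.
case: d => [y'|].
  by rewrite r01_some // lerD2l lerN2 !hy ler_pM2r ?invr_gt0 // ler_expR hmax.
rewrite r01_none // lerD2l lerN2 hy hl -subr_le0 -hM E.
apply: mulr_le0_ge0; last by rewrite invr_ge0 ltW.
apply: mulr_le0_ge0; last exact: ltW.
by rewrite subr_le0 hM ler_expR.
Qed.


Lemma mf_inv (R : realType) (d : measure_display) (T : measurableType d) (f : T -> R) :
  measurable_fun setT f -> (forall x, 0 < f x) -> measurable_fun setT (fun x => (f x)^-1).
Proof.
move=> mf f0.
apply: (eq_measurable_fun (fun x => expR (- ln (f x)))).
  by move=> x _; rewrite expRN lnKp.
apply: measurableT_comp; first exact: measurable_expR.
apply: measurable_funN; apply: measurableT_comp => //; exact: measurable_ln.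
Qed.

Lemma mf_div (R : realType) (d : measure_display) (T : measurableType d) (f g : T -> R) :
  measurable_fun setT f -> measurable_fun setT g -> (forall x, 0 < g x) ->
  measurable_fun setT (fun x => f x / g x).
Proof. by move=> mf mg g0; apply: measurable_funM => //; exact: mf_inv. Qed.

Lemma mf_ln (R : realType) (d : measure_display) (T : measurableType d) (f : T -> R) :
  measurable_fun setT f -> measurable_fun setT (fun x => ln (f x)).
Proof. by move=> mf; apply: measurableT_comp => //; exact: measurable_ln. Qed.

Lemma mf_exp (R : realType) (d : measure_display) (T : measurableType d) (f : T -> R) :
  measurable_fun setT f -> measurable_fun setT (fun x => expR (f x)).
Proof. by move=> mf; apply: measurableT_comp => //; exact: measurable_expR. Qed.

Lemma mf_bigmax (R : realType) (d : measure_display) (T : measurableType d)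
  (I : Type) (r : seq I) (P : pred I) (F : I -> T -> R) :
  (forall i, measurable_fun setT (F i)) ->
  measurable_fun setT (fun x => \big[Num.max/0]_(i <- r | P i) F i x).
Proof.
move=> mF; elim: r => [|a r IH].
  under eq_fun do rewrite big_nil; exact: measurable_cst.
under eq_fun do rewrite big_cons.
case: (P a) => //; exact: measurable_maxr.
Qed.

Lemma mf_Sx (R : realType) (K : nat) (d : measure_display) (T : measurableType d)
  (g : 'I_K.+1 -> T -> R) : meas_score g ->
  measurable_fun setT (fun x => Sx (fun i => g i x)).
Proof.
move=> mg; under eq_fun do rewrite Sx_lab.
by apply: measurable_sum => y; apply: mf_exp.
Qed.

Lemma mf_Mx (R : realType) (K : nat) (d : measure_display) (T : measurableType d)
  (g : 'I_K.+1 -> T -> R) : meas_score g ->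
  measurable_fun setT (fun x => Mx (fun i => g i x)).
Proof.
move=> mg; rewrite /Mx.
by apply: (@mf_bigmax R d T 'I_K.+1 (index_enum 'I_K.+1) (fun j => (j < K)%N) (fun j x => expR (g j x))) => j; apply: mf_exp.
Qed.

Lemma mf_asoft (R : realType) (K : nat) (hK : (1 < K)%N) (d : measure_display)
  (T : measurableType d) (g : 'I_K.+1 -> T -> R) : meas_score g ->
  forall i, measurable_fun setT (fun x => asoftmax (fun j => g j x) i).
Proof.
move=> mg i; have K0 : (0 < K)%N by apply: ltn_trans hK.
case: (ord_cases i) => [->|[y ->]].
  under eq_fun do rewrite asoft_last.
  apply: mf_div; first exact: mf_exp.
    apply: measurable_funB; last exact: mf_Mx.
    by apply: measurable_funD; [exact: mf_Sx|exact: mf_exp].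
  by move=> x; have := SMx_gt0 (fun j => g j x) hK; have := expR_gt0 (g ord_max x); lra.
under eq_fun do rewrite asoft_lab.
apply: mf_div; [exact: mf_exp|exact: mf_Sx|].
by move=> x; apply: Sx_gt0.
Qed.

Lemma mf_Lpsi (R : realType) (K : nat) (hK : (1 < K)%N) (d : measure_display)
  (T : measurableType d) (g : 'I_K.+1 -> T -> R) : meas_score g ->
  forall y m, measurable_fun setT (fun x => Lpsi (fun j => g j x) y m).
Proof.
move=> mg y m; rewrite /Lpsi.
have ha := mf_asoft hK mg.
have cl : forall (b : bool) (F : T -> R), measurable_fun setT F ->
   measurable_fun setT (fun x => if b then F x else 0).
  by move=> [] F mF //=; exact: measurable_cst.
apply: measurable_funB; last by apply: cl; exact: mf_ln.
apply: measurable_funB; last first.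
  apply: cl; apply: mf_ln; apply: measurable_funB => //; exact: measurable_cst.
by apply: measurable_funN; apply: mf_ln.
Qed.

Lemma mf_Cr (R : realType) (K : nat) (hK : (1 < K)%N) (d : measure_display)
  (T : measurableType d) (p : T -> 'I_K -> 'I_K -> R) (g : 'I_K.+1 -> T -> R) :
  cond_pmf p -> meas_score g ->
  measurable_fun setT (fun x => Cr (p x) (fun j => g j x)).
Proof.
move=> [_ _ mp] mg; rewrite /Cr.
apply: measurable_sum => y; apply: measurable_sum => m.
apply: measurable_funM; [exact: mp|exact: mf_Lpsi].
Qed.


Lemma mdec_comp (R : realType) (K : nat) (d : measure_display) (T : measurableType d)
  (f : T -> option 'I_K) (G : option 'I_K -> T -> R) :
  meas_dec f -> (forall o, measurable_fun setT (G o)) ->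
  measurable_fun setT (fun x => G (f x) x).
Proof.
move=> mf mG.
apply: (eq_measurable_fun (fun x => \sum_(o : option 'I_K) \1_(f @^-1` [set o]) x * G o x)).
  move=> x _; rewrite (bigD1 (f x)) //= indicE mem_set // mul1r big1 ?addr0 //.
  by move=> o ho; rewrite indicE memNset ?mul0r //= => h; move/eqP: ho; apply.
apply: measurable_sum => o; apply: measurable_funM => //.
Qed.

Definition Fb (K : nat) (b : {ffun 'I_K.+1 * 'I_K.+1 -> bool}) : option 'I_K :=
  if [forall y : 'I_K, ~~ b (ord_max, lab y)] then None
  else [pick y : 'I_K | [forall y' : 'I_K, b (lab y', lab y)]].

Lemma phi_Fb (R : realType) (K : nat) (u : 'I_K.+1 -> R) :
  phi u = Fb [ffun ij => u ij.1 <= u ij.2].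
Proof.
rewrite /phi /Fb.
have -> : [forall y : 'I_K, u (lab y) < u ord_max] =
          [forall y : 'I_K, ~~ [ffun ij => u ij.1 <= u ij.2] (ord_max, lab y)].
  by apply: eq_forallb => y; rewrite ffunE /= ltNge.
case: ifP => // _; apply: eq_pick => y /=; apply: eq_forallb => y'.
by rewrite ffunE.
Qed.

Lemma meas_dec_phi (R : realType) (K : nat) (d : measure_display) (T : measurableType d)
  (g : 'I_K.+1 -> T -> R) : meas_score g ->
  meas_dec (fun x => phi (fun i => g i x)).
Proof.
move=> mg o.
have -> : (fun x => phi (fun i => g i x)) @^-1` [set o] =
  \bigcup_(b in [set b | Fb b = o])
     \bigcap_(ij in [set: 'I_K.+1 * 'I_K.+1]) [set x | (g ij.1 x <= g ij.2 x) = b ij].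
  apply/seteqP; split => x /=.
    move=> hx; exists [ffun ij => g ij.1 x <= g ij.2 x].
      by rewrite /= -hx phi_Fb.
    by move=> ij _; rewrite /= ffunE.
  move=> [b /= hb hx]; rewrite phi_Fb.
  have -> : [ffun ij => g ij.1 x <= g ij.2 x] = b.
    by apply/ffunP => ij; rewrite ffunE; exact: hx ij I.
  by [].
apply: fin_bigcup_measurable; first exact: finite_finset.
move=> b _; apply: fin_bigcap_measurable; first exact: finite_finset.
move=> ij _.
have mh : measurable_fun setT (fun x => g ij.1 x <= g ij.2 x).
  by apply: measurable_fun_ler; apply: mg.
have := mh measurableT [set b ij] I; rewrite setTI.
by [].
Qed.


Lemma psi_le1 (R : realType) (K : nat) (hK : (1 < K)%N) (u : 'I_K.+1 -> R) i :
  `|asoftmax u i| <= 1.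
Proof.
have K0 : (0 < K)%N by apply: ltn_trans hK.
case: (ord_cases i) => [->|[y ->]].
  by have /andP [a0 a1] := psil_bnd u hK; rewrite ger0_norm ?ltW.
rewrite ger0_norm; last exact/ltW/psi_pos.
rewrite -(psi_sum u K0) (bigD1 y) //= lerDl.
by apply: sumr_ge0 => j _; apply: ltW; apply: psi_pos.
Qed.

Lemma unit_mf (R : realType) (f : unit -> R) : measurable_fun setT f.
Proof. by move=> _ Y _. Qed.

Lemma unit_mfe (R : realType) (f : unit -> \bar R) : measurable_fun setT f.
Proof. by move=> _ Y _. Qed.

Lemma part3 (R : realType) (K : nat) (hK : (1 < K)%N)
  (h : ('I_K.+1 -> R) -> ('I_K.+1 -> R)) :
  prob_estimator h -> forall u i, `|h u i| <= 1.
Proof.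
move=> hh u i.
have K0 : (0 < K)%N by apply: ltn_trans hK.
have [alt altN] : exists alt : 'I_K -> 'I_K, forall y, alt y != y.
  exists (fun y => if y == Ordinal K0 then Ordinal hK else Ordinal K0) => y.
  case: (eqVneq y (Ordinal K0)) => [->|ne]; last by rewrite eq_sym.
  by rewrite ?eqxx; apply/negP => /eqP/(congr1 val).
pose c := asoftmax u ord_max.
have /andP [c0 c1] := psil_bnd u hK.
pose ps y := asoftmax u (lab y).
pose q (y m : 'I_K) : R :=
  if m == y then c * ps y else if m == alt y then (1 - c) * ps y else 0.
have q0 : forall y m, 0 <= q y m.
  move=> y m; rewrite /q; case: ifP => _.
    by apply: mulr_ge0; [exact: ltW|apply: ltW; exact: psi_pos].
  case: ifP => _ //; apply: mulr_ge0; [rewrite subr_ge0; exact: ltW|apply: ltW; exact: psi_pos].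
have eq : forall y, etaq q y = ps y.
  move=> y; rewrite /etaq (bigD1 y) //= /q eqxx (bigD1 (alt y)) //=.
  rewrite (negbTE (altN y)) eqxx big1 ?addr0; first (rewrite /c; ring).
  by move=> m /andP [hm1 hm2]; rewrite (negbTE hm1) (negbTE hm2).
have q1 : \sum_(y < K) \sum_(m < K) q y m = 1.
  by rewrite -(psi_sum u K0); apply: eq_bigr => y _; exact: eq y.
have ccq : cc q = c.
  rewrite /cc /q; under eq_bigr do rewrite eqxx.
  by rewrite -mulr_sumr psi_sum // mulr1.
have ht : asoftmax u = target q.
  apply/funext => j; case: (ord_cases j) => [->|[y ->]].
    by rewrite target_last ccq.
  by rewrite target_lab eq.
pose P : probability unit R := \d_tt.
pose p : unit -> 'I_K -> 'I_K -> R := fun _ => q.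
pose g : 'I_K.+1 -> unit -> R := fun i _ => u i.
have hp : cond_pmf p.
  by split.
have hg : risk_minimizer P p g.
  split; first by move=> j; exact: measurable_cst.
  move=> g' mg'; rewrite /Rpsi !integral_dirac //; try exact: unit_mfe.
  rewrite diracT !mul1e lee_fin.
  exact: (opt_pt hK (fun j => g' j tt) q0 q1 ht).
have := hh _ _ P p g hp hg.
case=> A [mA PA NA].
have htt : h u = target q.
  case: (pselect (h u = target q)) => // hn; exfalso.
  have : A tt by apply: NA.
  move=> Att; have : (@dirac _ unit tt R) A = 0%E := PA.
  rewrite diracE mem_set //= => /eqP.
  by rewrite eqe oner_eq0.
by rewrite htt -ht psi_le1.
Qed.


Lemma Lpsi_ge0 (R : realType) (K : nat) (hK : (1 < K)%N) (u : 'I_K.+1 -> R) y m :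
  0 <= Lpsi u y m.
Proof.
have K0 : (0 < K)%N by apply: ltn_trans hK.
have /andP [a0 a1] := psil_bnd u hK.
have h1 : ln (asoftmax u (lab y)) <= 0.
  by apply: ln_le0; have := psi_le1 hK u (lab y); rewrite ger0_norm // ltW // psi_pos.
have h2 : ln (1 - asoftmax u ord_max) <= 0 by apply: ln_le0; lra.
have h3 : ln (asoftmax u ord_max) <= 0 by apply: ln_le0; lra.
rewrite /Lpsi; case: (m == y) => /=; lra.
Qed.

Lemma Cr_ge0 (R : realType) (K : nat) (hK : (1 < K)%N) (q : 'I_K -> 'I_K -> R) u :
  (forall y m, 0 <= q y m) -> 0 <= Cr q u.
Proof.
move=> q0; apply: sumr_ge0 => y _; apply: sumr_ge0 => m _.
by apply: mulr_ge0 => //; exact: Lpsi_ge0.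
Qed.

Lemma q_le1 (R : realType) (K : nat) (q : 'I_K -> 'I_K -> R) y m :
  (forall y m, 0 <= q y m) -> \sum_(y < K) \sum_(m < K) q y m = 1 -> q y m <= 1.
Proof.
move=> q0 q1; rewrite -q1 (bigD1 y) //= (bigD1 m) //= -addrA lerDl.
by apply: addr_ge0; apply: sumr_ge0 => *; [exact: q0|apply: sumr_ge0].
Qed.

Lemma Cr_bound (R : realType) (K : nat) (hK : (1 < K)%N) (q : 'I_K -> 'I_K -> R) :
  (forall y m, 0 <= q y m) -> \sum_(y < K) \sum_(m < K) q y m = 1 ->
  Cr q (fun _ => 0) <= \sum_(y < K) \sum_(m < K) Lpsi (fun _ : 'I_K.+1 => (0 : R)) y m.
Proof.
move=> q0 q1; apply: ler_sum => y _; apply: ler_sum => m _.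
rewrite -[leRHS]mul1r; apply: ler_wpM2r; first exact: Lpsi_ge0.
exact: q_le1.
Qed.

Lemma mf_etaq (R : realType) (K : nat) (d : measure_display) (T : measurableType d)
  (p : T -> 'I_K -> 'I_K -> R) : cond_pmf p ->
  forall y, measurable_fun setT (fun x => etaq (p x) y).
Proof. by move=> [_ _ mp] y; apply: measurable_sum => m; exact: mp. Qed.

Lemma mf_cc (R : realType) (K : nat) (d : measure_display) (T : measurableType d)
  (p : T -> 'I_K -> 'I_K -> R) : cond_pmf p ->
  measurable_fun setT (fun x => cc (p x)).
Proof. by move=> [_ _ mp]; apply: measurable_sum => y; exact: mp. Qed.


Lemma mf_half (R : realType) (d : measure_display) (T : measurableType d) (f : T -> R) :
  measurable_fun setT f -> measurable_fun setT (fun x => f x / 2).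
Proof. by move=> mf; apply: measurable_funM => //; exact: measurable_cst. Qed.

Lemma part2 (R : realType) (K : nat) (hK : (1 < K)%N)
    (d : measure_display) (T : measurableType d) (P : probability T R)
    (p : T -> 'I_K -> 'I_K -> R) (hp : cond_pmf p)
    (gs : 'I_K.+1 -> T -> R) (hgs : risk_minimizer P p gs) :
  {ae P, forall x, asoftmax (fun i => gs i x) = target (p x)}.
Proof.
have K0 : (0 < K)%N by apply: ltn_trans hK.
have [p0 p1 mp] := hp; have [mgs hmin] := hgs.
pose b x y := (asoftmax (fun i => gs i x) (lab y) + etaq (p x) y) / 2.
pose be x := (asoftmax (fun i => gs i x) ord_max + cc (p x)) / 2.
pose g' i x := mkv (b x) (be x) i.
have hb : forall x y, 0 < b x y.
  move=> x y; have [e0 _ _] := pmf_facts (p0 x) (p1 x).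
  apply: divr_gt0 => //; have := e0 y; have := psi_pos (fun i => gs i x) y; lra.
have hbs : forall x, \sum_(y < K) b x y = 1.
  move=> x; have [_ e1 _] := pmf_facts (p0 x) (p1 x).
  by rewrite /b -mulr_suml big_split /= e1 psi_sum //; field.
have hbe : forall x, 0 < be x < 1.
  move=> x; have [_ _ /andP [c0 c1]] := pmf_facts (p0 x) (p1 x).
  have /andP [a0 a1] := psil_bnd (fun i => gs i x) hK.
  by rewrite /be; apply/andP; split; lra.
have hsp : forall x, (forall y, asoftmax (fun i => g' i x) (lab y) = b x y) /\
                     asoftmax (fun i => g' i x) ord_max = be x.
  by move=> x; apply: mkv_spec => //.
have himp : forall x, Cr (p x) (fun i => g' i x) <= Cr (p x) (fun i => gs i x) /\
   (Cr (p x) (fun i => g' i x) = Cr (p x) (fun i => gs i x) ->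
    asoftmax (fun i => gs i x) = target (p x)).
  move=> x; apply: improve_pt => //; [exact: (hsp x).1|exact: (hsp x).2].
have mb : forall y, measurable_fun setT (fun x => b x y).
  move=> y; apply: mf_half; apply: measurable_funD; first exact: mf_asoft.
  exact: mf_etaq.
have mbe : measurable_fun setT be.
  apply: mf_half; apply: measurable_funD; first exact: mf_asoft.
  exact: mf_cc.
have mg' : meas_score g'.
  move=> i; case: (ord_cases i) => [->|[y ->]]; last first.
    rewrite /g'; under eq_fun do rewrite mkv_lab; exact: mf_ln.
  rewrite /g'; under eq_fun do rewrite mkv_last.
  apply: mf_ln; apply: mf_div; last first.
  - by move=> x; have := hbe x; move=> /andP [_ h]; rewrite subr_gt0.
  - by apply: measurable_funB => //; exact: measurable_cst.
  apply: measurable_funM => //; apply: measurable_funB; first exact: measurable_cst.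
  have mg0 : meas_score (fun i x => mkv0 (b x) i).
    move=> j; case: (ord_cases j) => [->|[y ->]].
      by rewrite /mkv0 unlift_none; exact: measurable_cst.
    by under eq_fun do rewrite mkv0_lab; exact: mf_ln.
  exact: (mf_Mx mg0).
pose F x := Cr (p x) (fun i => gs i x).
pose G x := Cr (p x) (fun i => g' i x).
have mF : measurable_fun setT F by exact: mf_Cr.
have mG : measurable_fun setT G by exact: mf_Cr.
have F0 : forall x, 0 <= F x by move=> x; exact: Cr_ge0.
have G0 : forall x, 0 <= G x by move=> x; exact: Cr_ge0.
have DF0 : forall x, 0 <= F x - G x by move=> x; rewrite subr_ge0; exact: (himp x).1.
have hle : (\int[P]_x (F x)%:E <= \int[P]_x (G x)%:E)%E := hmin g' mg'.
pose L0 := \sum_(y < K) \sum_(m < K) Lpsi (fun _ : 'I_K.+1 => (0 : R)) y m.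
have hL : (\int[P]_x (F x)%:E <= L0%:E)%E.
  apply: (le_trans (hmin (fun _ _ => 0) (fun _ => measurable_cst _))).
  rewrite /Rpsi -[leRHS]mule1 -(probability_setT P) -integral_cst //.
  apply: ge0_le_integral => //.
  - by move=> x _; rewrite lee_fin; exact: Cr_ge0.
  - apply/measurable_EFinP; apply: (mf_Cr hK hp (g := fun _ _ => 0)).
    by move=> i; exact: measurable_cst.
  - by move=> x _; rewrite lee_fin; exact: Cr_bound.
clearbody L0.
have hsplit : (\int[P]_x (F x)%:E = \int[P]_x (G x)%:E + \int[P]_x (F x - G x)%:E)%E.
  rewrite -ge0_integralD //.
  - by apply: eq_integral => x _; rewrite -EFinD addrC subrK.
  - by move=> x _; rewrite lee_fin.
  - exact/measurable_EFinP.
  - by move=> x _; rewrite lee_fin.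
  - by apply/measurable_EFinP; exact: measurable_funB.
have Gfin : (\int[P]_x (G x)%:E)%E \is a fin_num.
  have I0 : (0 <= \int[P]_x (G x)%:E)%E by apply: integral_ge0 => x _; rewrite lee_fin.
  have hGF : (\int[P]_x (G x)%:E <= \int[P]_x (F x)%:E)%E.
    apply: ge0_le_integral => //.
    - by move=> x _; rewrite lee_fin.
    - exact/measurable_EFinP.
    - exact/measurable_EFinP.
    - by move=> x _; rewrite lee_fin; exact: (himp x).1.
  rewrite ge0_fin_numE; last exact: I0.
  have hL' : (L0%:E < +oo)%E by exact: ltry.
  have := le_lt_trans hL hL'.
  exact: le_lt_trans hGF.
have hD0 : (\int[P]_x (F x - G x)%:E = 0)%E.
  apply/eqP; rewrite eq_le; apply/andP; split.
    by move: hle; rewrite hsplit -{2}(adde0 (\int[P]_x (G x)%:E)%E) leeD2lE.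
  by apply: integral_ge0 => x _; rewrite lee_fin.
have hae : ae_eq P setT (fun x => (F x - G x)%:E) (cst 0%E).
  apply/(ae_eq_integral_abs P measurableT).
    by apply/measurable_EFinP; exact: measurable_funB.
  by rewrite -hD0; apply: eq_integral => x _; rewrite gee0_abs // lee_fin.
apply: filterS hae => x /(_ I) /= /eqP; rewrite eqe subr_eq0 => /eqP hx.
by apply: (himp x).2; rewrite -/(G x) -/(F x) hx.
Qed.


Lemma r01_ge0 (R : realType) (K : nat) (q : 'I_K -> 'I_K -> R) o :
  (forall y m, 0 <= q y m) -> 0 <= r01 q o.
Proof.
move=> q0; apply: sumr_ge0 => y _; apply: sumr_ge0 => m _.
by apply: mulr_ge0 => //; case: o => [?|] /=; exact: ler0n.
Qed.

Lemma mf_r01 (R : realType) (K : nat) (d : measure_display) (T : measurableType d)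
  (p : T -> 'I_K -> 'I_K -> R) (f : T -> option 'I_K) :
  cond_pmf p -> meas_dec f -> measurable_fun setT (fun x => r01 (p x) (f x)).
Proof.
move=> [_ _ mp] mf; apply: (mdec_comp (G := fun o x => r01 (p x) o)) => // o.
apply: measurable_sum => y; apply: measurable_sum => m.
by apply: measurable_funM => //; exact: measurable_cst.
Qed.

Lemma part1 (R : realType) (K : nat) (hK : (1 < K)%N)
    (d : measure_display) (T : measurableType d) (P : probability T R)
    (p : T -> 'I_K -> 'I_K -> R) (hp : cond_pmf p)
    (gs : 'I_K.+1 -> T -> R) (hgs : risk_minimizer P p gs) :
  forall f : T -> option 'I_K, meas_dec f ->
         (R01 P p (fun x => phi (fun i => gs i x)) <= R01 P p f)%E.
Proof.
move=> f mf.
have [p0 p1 mp] := hp; have [mgs _] := hgs.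
have mphi := meas_dec_phi mgs.
rewrite /R01.
apply: ae_ge0_le_integral.
- exact: measurableT.
- by move=> x _; rewrite lee_fin; apply: r01_ge0.
- by apply/measurable_EFinP; apply: mf_r01.
- by move=> x _; rewrite lee_fin; apply: r01_ge0.
- by apply/measurable_EFinP; apply: mf_r01.
apply: filterS (part2 hK hp hgs) => x hx _.
rewrite lee_fin; exact: (phi_opt hK (f x) (p0 x) (p1 x) hx).
Qed.

Unset Implicit Arguments.

Theorem theorem2 (R : realType) (K : nat) (hK : (1 < K)%N)
    (d : measure_display) (T : measurableType d) (P : probability T R)
    (p : T -> 'I_K -> 'I_K -> R) (hp : cond_pmf p)
    (gs : 'I_K.+1 -> T -> R) (hgs : risk_minimizer P p gs) :
  [/\ meas_dec (fun x => phi (fun i => gs i x)) /\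
      (forall f : T -> option 'I_K, meas_dec f ->
         (R01 P p (fun x => phi (fun i => gs i x)) <= R01 P p f)%E),
      {ae P, forall x, asoftmax (fun i => gs i x) = target (p x)}
    & forall h : ('I_K.+1 -> R) -> ('I_K.+1 -> R), prob_estimator h -> exists B : R, forall u i, `|h u i| <= B].
Proof.
split.
- split; first exact: meas_dec_phi hgs.1.
  move=> f mf; apply: part1 => //.
- by apply: filterS (part2 hK hp hgs).
- move=> h hh; exists 1 => u i; move: (part3 hK hh u i). exact.
Qed.
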